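(* Let $\Omega\subset\mathbb{R}^2$ have property (i). 1. If $\Omega$ has property $( * )$, then for every point $\omega\in\partial\Omega$ there exists $\omega^\diamond\in\partial\Omega^\diamond$ such that $\omega\in L(\omega^\diamond)$. 2. If $\Omega$ has property $( ** )$, then for every point $\omega^\diamond\in\partial\Omega^\diamond$ there exists $\omega\in\partial\Omega$ such that $\omega\in L(\omega^\diamond)$.
   Context: Points of $\mathbb{R}^2$: $(x,y)$; of $\mathbb{R}^{2*}$: $(p,q)$. Antipolar: $\Omega^\diamond=\{(p,q):px-qy\ge1\ \forall (x,y)\in\Omega\}$. For $\omega^\diamond=(p,q)$, $L(\omega^\diamond)=\{(x,y)\in\mathbb{R}^2: px-qy=1\}$. Property (i): $\Omega$ nonempty, convex, closed, $0\notin\Omega$, $\lambda\Omega\subset\Omega$ for all $\lambda>1$. $( * )$: $\lambda\Omega\cap\partial\Omega=\varnothing$ for all $\lambda>1$. $( ** )$: with $C=\operatorname{cl}(\mathbb{R}_+\Omega)$, $\mathbb{R}_+=[0,\infty)$, and $\partial C=l_0\cup l_1$ its two boundary rays, $\operatorname{dist}(l_0,\Omega)=\operatorname{dist}(l_1,\Omega)=0$. *)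

(* Defs.v *)
From HB Require Import structures.
From mathcomp Require Import all_boot all_order all_algebra.
From mathcomp Require Import all_classical all_reals all_analysis.
Set Implicit Arguments. Unset Strict Implicit. Unset Printing Implicit Defensive.
Import Order.TTheory GRing.Theory Num.Theory numFieldNormedType.Exports.
Local Open Scope classical_set_scope.
Local Open Scope ring_scope.

Section Defs.
Variable R : realType.
Notation P := (R * R)%type.

Definition bdry (A : set P) : set P := closure A `\` interior A.

Definition scal (l : R) (w : P) : P := (l * w.1, l * w.2).

Definition convex2 (A : set P) : Prop :=
  forall a b, A a -> A b -> forall t : R, 0 <= t <= 1 ->
    A (t * a.1 + (1 - t) * b.1, t * a.2 + (1 - t) * b.2).

Definition scale_set (l : R) (A : set P) : set P := [set scal l w | w in A].

Definition prop_i (O : set P) : Prop :=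
  O !=set0 /\ convex2 O /\ closed O /\ ~ O (0, 0) /\
  (forall l : R, 1 < l -> scale_set l O `<=` O).

Definition prop_star (O : set P) : Prop :=
  forall l : R, 1 < l -> scale_set l O `&` bdry O = set0.

Definition cone_of (O : set P) : set P :=
  closure [set scal t w | t in [set t : R | 0 <= t] & w in O].

Definition ray (d : P) : set P := [set scal t d | t in [set t : R | 0 <= t]].

Definition dist0 (A B : set P) : Prop :=
  forall e : R, 0 < e -> exists a b, A a /\ B b /\
    (a.1 - b.1) ^+ 2 + (a.2 - b.2) ^+ 2 < e ^+ 2.

Definition prop_starstar (O : set P) : Prop :=
  forall d : P, d != (0, 0) -> ray d `<=` bdry (cone_of O) -> dist0 (ray d) O.

Definition antipolar (O : set P) : set P :=
  [set pq | forall w, O w -> 1 <= pq.1 * w.1 - pq.2 * w.2].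

Definition Lline (pq : P) : set P := [set w | pq.1 * w.1 - pq.2 * w.2 = 1].

End Defs.

(* Main.v *)
Require Import Defs.
From HB Require Import structures.
From mathcomp Require Import all_boot all_order all_algebra.
From mathcomp Require Import all_classical all_reals all_analysis.
From mathcomp Require Import ring lra.
Import Order.TTheory GRing.Theory Num.Theory numFieldNormedType.Exports.
Local Open Scope classical_set_scope.
Local Open Scope ring_scope.


Lemma nbhs_box {R : realType} (p : R*R) (B : set (R*R)) :
  nbhs p B <-> exists2 e : R, 0 < e & forall q : R*R, `|q.1 - p.1| < e -> `|q.2 - p.2| < e -> B q.
Proof.
split.
  move=> /nbhs_ballP [e e0 H]; exists e => // q h1 h2; apply: H.
  by split => /=; rewrite /ball /= distrC.
move=> [e e0 H]; apply/nbhs_ballP; exists e => // q [/= h1 h2].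
by apply: H; rewrite distrC.
Qed.

Lemma closure_box {R : realType} (A : set (R*R)) p :
  (forall e : R, 0 < e -> exists q, A q /\ `|q.1 - p.1| < e /\ `|q.2 - p.2| < e) ->
  closure A p.
Proof.
move=> H B /nbhs_box [e e0 HB]; have [q [Aq [h1 h2]]] := H e e0.
by exists q; split => //; apply: HB.
Qed.

Lemma closure_box_inv {R : realType} (A : set (R*R)) p :
  closure A p ->
  (forall e : R, 0 < e -> exists q, A q /\ `|q.1 - p.1| < e /\ `|q.2 - p.2| < e).
Proof.
move=> H e e0.
have nb : nbhs p [set q : R*R | `|q.1 - p.1| < e /\ `|q.2 - p.2| < e].
  by apply/nbhs_box; exists e => // q h1 h2.
by have [q [Aq Bq]] := H _ nb; exists q.
Qed.

Lemma addrKr' {R : realType} (a b : R) : a + b - a = b.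
Proof. by rewrite addrAC subrr add0r. Qed.

Lemma small_mul_aux {R : realType} (a b K e : R) :
  0 < e -> 0 <= a -> 0 <= b -> b + 1 <= K -> a < e / K -> a * b < e.
Proof.
move=> e0 a0 b0 hK hs.
have K0 : 0 < K by lra.
have eK : e / K * K = e by rewrite mulfVK // gt_eqF.
have h0 : 0 < e / K by rewrite divr_gt0.
have h1 : a * b <= e / K * b by rewrite ler_wpM2r // ltW.
have h2 : e / K * b < e / K * K by rewrite ltr_pM2l //; lra.
lra.
Qed.

Lemma small_mul {R : realType} (s v K e : R) :
  0 < e -> `|v| + 1 <= K -> `|s| < e / K -> `|s * v| < e.
Proof.
move=> e0 hK hs; rewrite normrM; exact: (@small_mul_aux R _ _ K).
Qed.

Lemma nbhs_line {R : realType} {p : R*R} (v : R*R) {B : set (R*R)} :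
  nbhs p B -> exists2 h : R, 0 < h & forall s, `|s| < h -> B (p.1 + s * v.1, p.2 + s * v.2).
Proof.
move=> /nbhs_box [e e0 HB].
set K := `|v.1| + `|v.2| + 1.
have K0 : 0 < K by rewrite /K; have := normr_ge0 v.1; have := normr_ge0 v.2; lra.
exists (e / K); first by rewrite divr_gt0.
move=> s hs; apply: HB => /=; rewrite !addrKr'; apply: (@small_mul R _ _ K) => //;
  rewrite /K; have := normr_ge0 v.1; have := normr_ge0 v.2; lra.
Qed.

Lemma closure_line {R : realType} (A : set (R*R)) (p v : R*R) :
  (forall h : R, 0 < h -> exists s, `|s| < h /\ A (p.1 + s * v.1, p.2 + s * v.2)) ->
  closure A p.
Proof.
move=> H; apply: closure_box => e e0.
set K := `|v.1| + `|v.2| + 1.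
have K0 : 0 < K by rewrite /K; have := normr_ge0 v.1; have := normr_ge0 v.2; lra.
have [s [hs As]] := H (e / K) (divr_gt0 e0 K0).
exists (p.1 + s * v.1, p.2 + s * v.2); split => //=; rewrite !addrKr';
  split; apply: (@small_mul R _ _ K) => //;
  rewrite /K; have := normr_ge0 v.1; have := normr_ge0 v.2; lra.
Qed.

Lemma sqr_pos {R : realType} {x y : R} : ~ (x = 0 /\ y = 0) -> 0 < x ^+ 2 + y ^+ 2.
Proof.
move=> H; have [x0|x0] := eqVneq x 0.
  have y0 : y != 0 by apply/eqP => y0; apply: H.
  have : 0 < y ^+ 2 by rewrite lt0r sqrf_eq0 y0 sqr_ge0.
  by have := sqr_ge0 x; move=> ? ?; lra.
have : 0 < x ^+ 2 by rewrite lt0r sqrf_eq0 x0 sqr_ge0.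
by have := sqr_ge0 y; move=> ? ?; lra.
Qed.



Lemma pair_ineq {R : realType} (a b P1 P2 : R) : 0 < a -> 0 < b ->
  1 <= (b / (a + b)) * P1 + (1 - b / (a + b)) * P2 -> (1 - P1) / a <= (P2 - 1) / b.
Proof.
move=> a0 b0.
have ab0 : 0 < a + b by lra.
have -> : (b / (a + b)) * P1 + (1 - b / (a + b)) * P2 = (b * P1 + a * P2) / (a + b).
  by field; rewrite gt_eqF.
rewrite ler_pdivlMr // mul1r => H.
rewrite -subr_ge0.
have -> : (P2 - 1) / b - (1 - P1) / a = (b * P1 + a * P2 - (a + b)) / (a * b).
  by field; rewrite !gt_eqF.
by apply: divr_ge0; [lra | apply: mulr_ge0; lra].
Qed.

Lemma part1 {R : realType} (O : set (R*R)) : prop_i O -> prop_star O ->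
  forall w, bdry O w -> exists wd, bdry (antipolar O) wd /\ Lline wd w.
Proof.
move=> [HnO [Hcv [Hcl [H00 Hsc]]]] Hst [x y] bw.
have Ow : O (x, y) by move: bw => [cw _]; rewrite ((closure_id O).1 Hcl).
have xy0 : ~ (x = 0 /\ y = 0) by move=> [x0 y0]; apply: H00; move: Ow; rewrite x0 y0.
have N0 := sqr_pos xy0.
have NN : x ^+ 2 + y ^+ 2 != 0 by rewrite gt_eqF.
have int2 : nbhs ((2:R) * x, (2:R) * y) O.
  have O2 : O (2 * x, 2 * y) by apply: (Hsc 2); [lra | exists (x, y)].
  have H2 := Hst 2 ltac:(lra).
  have [//|ni] := pselect (nbhs ((2:R) * x, (2:R) * y) O).
  have : (scale_set 2 O `&` bdry O) (2 * x, 2 * y).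
    by split; [exists (x, y) | split; [apply: subset_closure | exact: ni]].
  by rewrite H2.
have [h h0 Hh] := nbhs_line (y, - x) int2.
pose P (z : R * R) := (x * z.1 + y * z.2) / (x ^+ 2 + y ^+ 2).
have KEY : forall z, O z -> y * z.1 - x * z.2 = 0 -> 1 <= P z.
  move=> [z1 z2] Oz /= hz.
  have e1 : P (z1, z2) * x = z1.
    have -> : P (z1, z2) * x = z1 - y * (y * z1 - x * z2) / (x ^+ 2 + y ^+ 2).
      by rewrite /P /=; field.
    by rewrite hz mulr0 mul0r subr0.
  have e2 : P (z1, z2) * y = z2.
    have -> : P (z1, z2) * y = z2 + x * (y * z1 - x * z2) / (x ^+ 2 + y ^+ 2).
      by rewrite /P /=; field.
    by rewrite hz mulr0 mul0r addr0.
  move: e1 e2; set mu := P (z1, z2) => e1 e2; clearbody mu.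
  rewrite leNgt; apply/negP => mu1.
  have [mu0|mu0] := lerP mu 0.
    have m0 : 0 < 1 - mu by lra.
    have t01 : 0 <= (1 - mu)^-1 <= 1.
      by apply/andP; split; [rewrite invr_ge0; lra | rewrite invf_le1 //; lra].
    have := Hcv _ _ Oz Ow _ t01 => /=.
    have -> : (1 - mu)^-1 * z1 + (1 - (1 - mu)^-1) * x = 0.
      by rewrite -e1; field; rewrite gt_eqF.
    have -> : (1 - mu)^-1 * z2 + (1 - (1 - mu)^-1) * y = 0.
      by rewrite -e2; field; rewrite gt_eqF.
    exact: H00.
  have := Hst mu^-1; rewrite invf_gt1 // => /(_ mu1) H.
  have : (scale_set mu^-1 O `&` bdry O) (x, y).
    split => //; exists (z1, z2) => //.
    by rewrite /scal /= -e1 -e2 !mulrA mulVf ?mul1r // gt_eqF.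
  by rewrite H.
have PAIR : forall z z', O z -> O z' -> 0 < y * z.1 - x * z.2 -> y * z'.1 - x * z'.2 < 0 ->
    (1 - P z) / (y * z.1 - x * z.2) <= (P z' - 1) / (- (y * z'.1 - x * z'.2)).
  move=> [z1 z2] [z1' z2'] Oz Oz' /= a0 b0.
  move: a0 b0; set a := y * z1 - x * z2; set b' := y * z1' - x * z2' => a0 b0.
  have b0' : 0 < - b' by lra.
  apply: pair_ineq => //.
  have t01 : 0 <= - b' / (a + - b') <= 1.
    apply/andP; split; first by apply: divr_ge0; lra.
    by rewrite ler_pdivrMr; lra.
  have := Hcv _ _ Oz Oz' _ t01 => /= Oc.
  have := KEY _ Oc => /=.
  have -> : P (- b' / (a + - b') * z1 + (1 - - b' / (a + - b')) * z1',
              - b' / (a + - b') * z2 + (1 - - b' / (a + - b')) * z2') =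
            - b' / (a + - b') * P (z1, z2) + (1 - - b' / (a + - b')) * P (z1', z2').
    by rewrite /P /=; field; rewrite NN gt_eqF //; lra.
  apply.
  have ab : a + - b' != 0 by rewrite gt_eqF //; lra.
  move: ab; rewrite /a /b' => ab.
  by field.
have hh : `|h / 2| < h by rewrite gtr0_norm ?divr_gt0 //; lra.
have hh' : `|- (h / 2)| < h by rewrite normrN.
have OzL := Hh _ hh; have OzU := Hh _ hh'; move: OzL OzU => /= OzL OzU.
set zL := (_, _) in OzL; set zU := (_, _) in OzU.
have aL : 0 < y * zL.1 - x * zL.2.
  have -> : y * zL.1 - x * zL.2 = h / 2 * (x ^+ 2 + y ^+ 2) by rewrite /zL /=; ring.
  by apply: mulr_gt0 => //; lra.
have aU : y * zU.1 - x * zU.2 < 0.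
  have -> : y * zU.1 - x * zU.2 = - (h / 2 * (x ^+ 2 + y ^+ 2)) by rewrite /zU /=; ring.
  by rewrite oppr_lt0; apply: mulr_gt0 => //; lra.
pose L := [set l : R | exists z, O z /\ 0 < y * z.1 - x * z.2 /\ l = (1 - P z) / (y * z.1 - x * z.2)].
have L0 : L !=set0 by exists ((1 - P zL) / (y * zL.1 - x * zL.2)); exists zL.
have Lub : forall z', O z' -> y * z'.1 - x * z'.2 < 0 ->
    ubound L ((P z' - 1) / (- (y * z'.1 - x * z'.2))).
  move=> z' Oz' b0 l [z [Oz [a0 el]]]; rewrite el; exact: PAIR.
have Lsup : has_sup L by split => //; exists ((P zU - 1) / (- (y * zU.1 - x * zU.2))); apply: Lub.
pose s := sup L.
exists (x / (x ^+ 2 + y ^+ 2) + s * y, - y / (x ^+ 2 + y ^+ 2) + s * x).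
have Ewd : forall z : R * R, (x / (x ^+ 2 + y ^+ 2) + s * y) * z.1 -
    (- y / (x ^+ 2 + y ^+ 2) + s * x) * z.2 = P z + s * (y * z.1 - x * z.2).
  by move=> z; rewrite /P; field.
have Apol : antipolar O (x / (x ^+ 2 + y ^+ 2) + s * y, - y / (x ^+ 2 + y ^+ 2) + s * x).
  move=> z Oz /=; rewrite Ewd.
  have [a0|a0|a0] := ltrgtP 0 (y * z.1 - x * z.2).
  - have : (1 - P z) / (y * z.1 - x * z.2) <= s.
      by apply: sup_upper_bound => //; exists z.
    by rewrite ler_pdivrMr // => ?; lra.
  - have : s <= (P z - 1) / (- (y * z.1 - x * z.2)) by apply: ge_sup => //; apply: Lub.
    rewrite ler_pdivlMr; last by lra.
    move=> ?; lra.
  - by rewrite -a0 mulr0 addr0; apply: KEY.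
split; last first.
  by rewrite /Lline /=; field.
split; first exact: subset_closure.
move=> /(nbhs_line (x / (x ^+ 2 + y ^+ 2) + s * y, - y / (x ^+ 2 + y ^+ 2) + s * x)) [h' h0' H'].
have hh2 : `|- (h' / 2)| < h' by rewrite normrN gtr0_norm ?divr_gt0 //; lra.
have := H' _ hh2 _ Ow => /=.
have -> : (x / (x ^+ 2 + y ^+ 2) + s * y + - (h' / 2) * (x / (x ^+ 2 + y ^+ 2) + s * y)) * x -
  (- y / (x ^+ 2 + y ^+ 2) + s * x + - (h' / 2) * (- y / (x ^+ 2 + y ^+ 2) + s * x)) * y
  = 1 - h' / 2 by field.
lra.
Qed.


Definition pr {R : realType} (p z : R * R) : R := p.1 * z.1 - p.2 * z.2.

Lemma lin_cont {R : realType} (a b : R) : continuous (fun z : R * R => a * z.1 + b * z.2).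
Proof.
move=> z; apply/cvgrPdist_lt => e e0; apply/nbhs_box.
set K := `|a| + `|b| + 1.
have K0 : 0 < K by rewrite /K; have := normr_ge0 a; have := normr_ge0 b; move=> ? ?; lra.
have e2 : 0 < e / 2 by rewrite divr_gt0.
exists (e / 2 / K); first by rewrite divr_gt0.
move=> q h1 h2 /=.
have s1 := @small_mul R _ a K _ e2 ltac:(rewrite /K; have := normr_ge0 b; move=> ?; lra) h1.
have s2 := @small_mul R _ b K _ e2 ltac:(rewrite /K; have := normr_ge0 a; move=> ?; lra) h2.
have -> : a * z.1 + b * z.2 - (a * q.1 + b * q.2) = - ((q.1 - z.1) * a + (q.2 - z.2) * b) by ring.
rewrite normrN (le_lt_trans (ler_normD _ _)) //; lra.
Qed.

Lemma pr_contr {R : realType} (p : R * R) : continuous (fun z => pr p z).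
Proof.
have -> : (fun z => pr p z) = (fun z : R * R => p.1 * z.1 + (- p.2) * z.2).
  by apply: funext => z; rewrite /pr; ring.
exact: lin_cont.
Qed.

Lemma pr_contl {R : realType} (v : R * R) : continuous (fun g => pr g v).
Proof.
have -> : (fun g => pr g v) = (fun z : R * R => v.1 * z.1 + (- v.2) * z.2).
  by apply: funext => z; rewrite /pr; ring.
exact: lin_cont.
Qed.

Lemma pair_cont {R : realType} (g1 g2 : R * R -> R) :
  continuous g1 -> continuous g2 -> continuous (fun z => (g1 z, g2 z)).
Proof.
move=> c1 c2 z B /nbhs_box [e e0 HB].
have n1 : \forall q \near z, `|g1 z - g1 q| < e.
  exact: (@cvgr_dist_lt R R _ (nbhs z) _ g1 (g1 z) (c1 z) e e0).
have n2 : \forall q \near z, `|g2 z - g2 q| < e.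
  exact: (@cvgr_dist_lt R R _ (nbhs z) _ g2 (g2 z) (c2 z) e e0).
apply: filterS (filterI n1 n2) => q [/= h1 h2].
by apply: HB => /=; rewrite distrC.
Qed.

Lemma amgm {R : realType} (f1 f2 u1 u2 e : R) : 0 < e -> u1 ^+ 2 + u2 ^+ 2 < e ^+ 2 ->
  f1 * u1 - f2 * u2 < e * (f1 ^+ 2 + f2 ^+ 2 + 1) / 2.
Proof.
move=> e0 hu.
have h1 := sqr_ge0 (e * f1 - u1).
have h2 := sqr_ge0 (e * f2 + u2).
have H : 2 * e * (f1 * u1 - f2 * u2) < e ^+ 2 * (f1 ^+ 2 + f2 ^+ 2 + 1).
  nra.
rewrite ltr_pdivlMr; last by lra.
nra.
Qed.

Lemma pr_lin {R : realType} (f : R * R) (a b : R) (u v : R * R) :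
  pr f (a * u.1 + b * v.1, a * u.2 + b * v.2) = a * pr f u + b * pr f v.
Proof. by rewrite /pr /=; ring. Qed.

Lemma cone_nonneg {R : realType} (O : set (R * R)) (f : R * R) :
  antipolar O f -> forall q, cone_of O q -> 0 <= pr f q.
Proof.
move=> Af q cq; rewrite leNgt; apply/negP => fq.
have e0 : 0 < - pr f q / 2 by rewrite divr_gt0 //; lra.
pose K : R := `|f.1| + `|f.2| + 1.
have K0 : 0 < K by rewrite /K; have := normr_ge0 f.1; have := normr_ge0 f.2; move=> ? ?; lra.
have [q' [[t t0 [w Ow <-]] [h1 h2]]] := @closure_box_inv R _ _ cq _ (divr_gt0 e0 K0).
have s1 := @small_mul R _ f.1 K _ e0 ltac:(rewrite /K; have := normr_ge0 f.2; move=> ?; lra) h1.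
have s2 := @small_mul R _ f.2 K _ e0 ltac:(rewrite /K; have := normr_ge0 f.1; move=> ?; lra) h2.
have pw : 0 <= pr f (scal t w).
  have -> : pr f (scal t w) = t * pr f w by rewrite /pr /scal /=; ring.
  by apply: mulr_ge0 => //; have := Af w Ow; rewrite /pr => ?; lra.
have E : pr f (scal t w) = pr f q + ((scal t w).1 - q.1) * f.1 - ((scal t w).2 - q.2) * f.2.
  by rewrite /pr; ring.
move: s1 s2; rewrite !ltr_norml => /andP [s1 s1'] /andP [s2 s2'].
lra.
Qed.

Lemma sector {R : realType} (O : set (R * R)) (f m d : R * R) (k : R * R -> R) :
  O !=set0 -> prop_starstar O -> antipolar O f ->
  pr f m = 1 -> pr f d = 0 -> d != (0, 0) ->
  (forall z, z.1 = pr f z * m.1 + k z * d.1 /\ z.2 = pr f z * m.2 + k z * d.2) ->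
  exists2 e : R, 0 < e & forall z, O z -> e * k z <= pr f z.
Proof.
move=> [z0 Oz0] Hss Af fm fd d0 dec.
have fpos : forall z, O z -> 1 <= pr f z by move=> z Oz; exact: Af.
case: (pselect (exists2 e : R, 0 < e & forall z, O z -> e * k z <= pr f z)) => [//|ne].
exfalso.
have H : forall e : R, 0 < e -> exists z, O z /\ pr f z < e * k z.
  move=> e e0; case: (pselect (exists z, O z /\ pr f z < e * k z)) => [//|nz].
  exfalso; apply: ne; exists e => // z Oz; rewrite leNgt; apply/negP => hz.
  by apply: nz; exists z.
have Rb : ray d `<=` bdry (cone_of O).
  move=> _ [t t0 <-]; have {}t0 : 0 <= t := t0; split.
    apply: (@closure_line R _ _ m) => h h0.
    have t1 : 0 < t + 1 by lra.
    have [z [Oz hz]] := H (h / (t + 1)) (divr_gt0 h0 t1).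
    have fz := fpos z Oz.
    have kz : 0 < k z.
      have : 0 < h / (t + 1) * k z by lra.
      by rewrite pmulr_rgt0 // divr_gt0.
    have fk : pr f z / k z < h / (t + 1) by rewrite ltr_pdivrMr.
    exists (t * (pr f z / k z)); split.
      rewrite ger0_norm; last by apply: mulr_ge0 => //; apply: divr_ge0 => //; lra.
      have : t * (pr f z / k z) <= t * (h / (t + 1)) by rewrite ler_wpM2l // ltW.
      have : t * (h / (t + 1)) < h.
        by rewrite mulrA ltr_pdivrMr //; nra.
      move=> ? ?; lra.
    apply: subset_closure; exists (t / k z); first by rewrite /= divr_ge0 // ltW.
    exists z => //.
    have [e1 e2] := dec z.
    rewrite /scal /= e1 e2; congr pair; field; rewrite gt_eqF //.
  move=> /(nbhs_line m) [h h0 Hh].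
  have hh : `|- (h / 2)| < h by rewrite normrN gtr0_norm ?divr_gt0 //; lra.
  have := @cone_nonneg R O f Af _ (Hh _ hh); rewrite /scal /= pr_lin fd fm; lra.
pose D := f.1 ^+ 2 + f.2 ^+ 2.
have D0 : 0 < D + 1 by rewrite /D; have := sqr_ge0 f.1; have := sqr_ge0 f.2; move=> ? ?; lra.
have e0 : 0 < 1 / (D + 1) by rewrite divr_gt0.
have [a [b [Ra [Ob hab]]]] := Hss d d0 Rb _ e0.
move: Ra => [t t0 ea].
have fa : pr f a = 0.
  rewrite -ea; have -> : pr f (scal t d) = t * pr f d by rewrite /pr /scal /=; ring.
  by rewrite fd mulr0.
have := @amgm R (- f.1) (- f.2) _ _ _ e0 hab.
rewrite !sqrrN -/D.
have -> : 1 / (D + 1) * (D + 1) / 2 = 1 / 2 by field; rewrite gt_eqF.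
have := fpos b Ob.
have -> : pr f b = pr f a + (- f.1 * (a.1 - b.1) - - f.2 * (a.2 - b.2)) by rewrite /pr; ring.
rewrite fa; lra.
Qed.

Lemma near_pr {R : realType} (p v : R * R) (eta : R) : 0 < eta ->
  exists2 r : R, 0 < r & forall g : R * R, `|g.1 - p.1| < r -> `|g.2 - p.2| < r ->
    `|pr p v - pr g v| < eta.
Proof.
move=> e0.
pose K : R := `|v.1| + `|v.2| + 1.
have K0 : 0 < K by rewrite /K; have := normr_ge0 v.1; have := normr_ge0 v.2; move=> ? ?; lra.
have e2 : 0 < eta / 2 by rewrite divr_gt0.
exists (eta / 2 / K); first by rewrite divr_gt0.
move=> q h1 h2.
have s1 := @small_mul R _ v.1 K _ e2 ltac:(rewrite /K; have := normr_ge0 v.2; move=> ?; lra) h1.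
have s2 := @small_mul R _ v.2 K _ e2 ltac:(rewrite /K; have := normr_ge0 v.1; move=> ?; lra) h2.
have -> : pr p v - pr q v = - ((q.1 - p.1) * v.1 + - ((q.2 - p.2) * v.2)) by rewrite /pr; ring.
rewrite normrN (le_lt_trans (ler_normD _ _)) // normrN; lra.
Qed.

Lemma part2 {R : realType} (O : set (R * R)) : prop_i O -> prop_starstar O ->
  forall wd, bdry (antipolar O) wd -> exists w, bdry O w /\ Lline wd w.
Proof.
move=> [HnO [Hcv [Hcl [H00 Hsc]]]] Hss f [cf nif].
have Af : antipolar O f.
  move=> z Oz; rewrite leNgt; apply/negP => fz.
  have e0 : 0 < (1 - pr f z) / 2 by rewrite divr_gt0 //; rewrite /pr; lra.
  pose K : R := `|z.1| + `|z.2| + 1.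
  have K0 : 0 < K by rewrite /K; have := normr_ge0 z.1; have := normr_ge0 z.2; move=> ? ?; lra.
  have [q [Aq [h1 h2]]] := @closure_box_inv R _ _ cf _ (divr_gt0 e0 K0).
  have s1 := @small_mul R _ z.1 K _ e0 ltac:(rewrite /K; have := normr_ge0 z.2; move=> ?; lra) h1.
  have s2 := @small_mul R _ z.2 K _ e0 ltac:(rewrite /K; have := normr_ge0 z.1; move=> ?; lra) h2.
  have := Aq z Oz.
  have -> : q.1 * z.1 - q.2 * z.2 = pr f z + (q.1 - f.1) * z.1 - (q.2 - f.2) * z.2 by rewrite /pr; ring.
  move: s1 s2; rewrite !ltr_norml => /andP [s1 s1'] /andP [s2 s2'].
  lra.
have fpos : forall z, O z -> 1 <= pr f z by move=> z Oz; exact: Af.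
have [z0 Oz0] := HnO.
move: f cf nif Af fpos => [f1 f2] cf nif Af fpos.
have f0 : ~ (f1 = 0 /\ f2 = 0).
  move=> [e1 e2]; have := fpos z0 Oz0; rewrite /pr /= e1 e2; lra.
have D0 := sqr_pos f0.
have DN : f1 ^+ 2 + f2 ^+ 2 != 0 by rewrite gt_eqF.
pose m : R * R := (f1 / (f1 ^+ 2 + f2 ^+ 2), - f2 / (f1 ^+ 2 + f2 ^+ 2)).
pose n : R * R := (f2, f1).
pose k (z : R * R) := (f2 * z.1 + f1 * z.2) / (f1 ^+ 2 + f2 ^+ 2).
have fm : pr (f1, f2) m = 1 by rewrite /pr /m /=; field.
have fn : pr (f1, f2) n = 0 by rewrite /pr /n /=; ring.
have n0 : n != (0, 0) by apply/eqP => -[e2 e1]; apply: f0.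
have fnN : pr (f1, f2) (- n.1, - n.2) = 0 by rewrite /pr /n /=; ring.
have nN0 : (- n.1, - n.2) != (0, 0).
  apply/eqP => -[/eqP e2 /eqP e1]; apply: f0; move: e1 e2; rewrite !oppr_eq0.
  by move=> /eqP -> /eqP ->.
have dec : forall z, z.1 = pr (f1, f2) z * m.1 + k z * n.1 /\ z.2 = pr (f1, f2) z * m.2 + k z * n.2.
  by move=> [z1 z2]; rewrite /pr /m /n /k /=; split; field.
have decN : forall z, z.1 = pr (f1, f2) z * m.1 + (- k z) * (- n.1) /\
                     z.2 = pr (f1, f2) z * m.2 + (- k z) * (- n.2).
  by move=> z; rewrite !mulrNN; exact: dec.
have [e1 e1p S1] := @sector R O (f1, f2) m n k HnO Hss Af fm fn n0 dec.
have [e2 e2p S2] := @sector R O (f1, f2) m (- n.1, - n.2) (fun z => - k z) HnO Hss Af fm fnN nN0 decN.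
have kb1 : forall z, O z -> k z <= pr (f1, f2) z / e1.
  by move=> z Oz; rewrite ler_pdivlMr // mulrC; exact: S1.
have kb2 : forall z, O z -> - k z <= pr (f1, f2) z / e2.
  by move=> z Oz; rewrite ler_pdivlMr // mulrC; exact: S2.
pose K := pr (f1, f2) z0.
pose Gm := fun p : R * R => (m.1 * p.1 + n.1 * p.2, m.2 * p.1 + n.2 * p.2).
have Gc : continuous Gm by apply: pair_cont; apply: lin_cont.
pose A := Gm @` (`[0, K] `*` `[- (K / e2), K / e1]) `&` O.
have cA : compact A.
  apply: compact_closedI => //; apply: continuous_compact; first exact: continuous_subspaceT.
  by apply: compact_setX; apply: segment_compact.
have inA : forall z, O z -> pr (f1, f2) z <= K -> A z.
  move=> z Oz hz; split => //; exists (pr (f1, f2) z, k z).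
    have := fpos z Oz; have := kb1 z Oz; have := kb2 z Oz => h2 h1 h0.
    have q1 : pr (f1, f2) z / e1 <= K / e1 by rewrite ler_pM2r // invr_gt0.
    have q2 : pr (f1, f2) z / e2 <= K / e2 by rewrite ler_pM2r // invr_gt0.
    split => /=; rewrite in_itv /=; apply/andP; split; lra.
  have [d1 d2] := dec z.
  rewrite /Gm /=; apply: injective_projections => /=.
    by rewrite [RHS]d1 /m /n /=; ring.
  by rewrite [RHS]d2 /m /n /=; ring.
have A0 : A !=set0 by exists z0; apply: inA => //; exact: lexx.
have [c cA' cmin] := @compact_EVT_min _ R (fun z => pr (f1, f2) z) A A0 cA
  (continuous_subspaceT (pr_contr _)).
move: cA' => /set_mem [_ Oc].
have cmin' : forall z, O z -> pr (f1, f2) c <= pr (f1, f2) z.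
  move=> z Oz; case: (lerP (pr (f1, f2) z) K) => hz.
    by apply: cmin; apply/mem_set; exact: inA.
  have := cmin z0 (mem_set (inA z0 Oz0 (lexx _))); rewrite -/K; lra.
have mu1 : pr (f1, f2) c <= 1.
  rewrite leNgt; apply/negP => mu1; apply: nif.
  set mu := pr (f1, f2) c in mu1 cmin'.
  pose G := 1 / e1 + 1 / e2.
  have G0 : 0 < G by rewrite /G; apply: addr_gt0; apply: divr_gt0.
  have mu0 : 0 < mu by lra.
  have eta0 : 0 < (1 - 1 / mu) / (1 + G).
    apply: divr_gt0; last by lra.
    by rewrite subr_gt0 ltr_pdivrMr // mul1r.
  set eta := (1 - 1 / mu) / (1 + G) in eta0.
  have [r1 r10 Hr1] := near_pr (f1, f2) m _ eta0.
  have [r2 r20 Hr2] := near_pr (f1, f2) n _ eta0.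
  apply/nbhs_box; exists (Num.min r1 r2); first by rewrite lt_min r10 r20.
  move=> g; rewrite !lt_min => /andP [g1 g1'] /andP [g2 g2'].
  have hm := Hr1 g g1 g2; have hn := Hr2 g g1' g2'.
  move: hm hn => /= hm hn z Oz.
  change (1 <= pr g z).
  have E : pr g z = pr g m * pr (f1, f2) z + pr g n * k z.
    have [d1 d2] := dec z.
    move: d1 d2; move: (pr (f1, f2) z) (k z) => F kz d1 d2.
    by rewrite /pr d1 d2; ring.
  rewrite E.
  have F1 := cmin' z Oz.
  move: hm hn; rewrite fm fn sub0r normrN !ltr_norml => /andP [hm hm'] /andP [hn hn'].
  have kb : `|k z| <= pr (f1, f2) z * G.
    rewrite ler_norml; have := kb1 z Oz; have := kb2 z Oz => h2 h1.
    have : pr (f1, f2) z * G = pr (f1, f2) z / e1 + pr (f1, f2) z / e2 by rewrite /G; ring.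
    have : 0 <= pr (f1, f2) z / e1 by apply: divr_ge0; lra.
    have : 0 <= pr (f1, f2) z / e2 by apply: divr_ge0; lra.
    move=> ? ? ?; apply/andP; split; lra.
  have b1 : `|pr g n * k z| <= eta * (pr (f1, f2) z * G).
    rewrite normrM; apply: ler_pM; [exact: normr_ge0 | exact: normr_ge0 | | exact: kb].
    by apply: ltW; rewrite ltr_norml; apply/andP; split; lra.
  have b2 : - (eta * (pr (f1, f2) z * G)) <= pr g n * k z.
    by move: b1; rewrite ler_norml => /andP [].
  have b3 : (1 - eta) * pr (f1, f2) z <= pr g m * pr (f1, f2) z.
    by rewrite ler_wpM2r //; lra.
  have key : pr (f1, f2) z * (1 - eta * (1 + G)) = pr (f1, f2) z / mu.
    rewrite /eta; field; apply/andP; split; rewrite gt_eqF //; lra.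
  have : 1 <= pr (f1, f2) z / mu by rewrite ler_pdivlMr // mul1r.
  move=> ?; lra.
have mu1' : pr (f1, f2) c = 1 by apply/eqP; rewrite eq_le mu1 fpos.
exists c; split; last by rewrite /Lline /=; exact: mu1'.
split; first exact: subset_closure.
move=> /(nbhs_line m) [h h0 Hh].
have hh : `|- (h / 2)| < h by rewrite normrN gtr0_norm ?divr_gt0 //; lra.
have := fpos _ (Hh _ hh).
have -> : pr (f1, f2) (c.1 + - (h / 2) * m.1, c.2 + - (h / 2) * m.2) =
          pr (f1, f2) c + - (h / 2) * pr (f1, f2) m by rewrite /pr /=; ring.
rewrite mu1' fm; lra.
Qed.


Theorem proposition1 (R : realType) (O : set (R * R)) :
  prop_i O ->
  (prop_star O ->
     forall w, bdry O w -> exists wd, bdry (antipolar O) wd /\ Lline wd w) /\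
  (prop_starstar O ->
     forall wd, bdry (antipolar O) wd -> exists w, bdry O w /\ Lline wd w).
Proof.
move=> HO; split.
  by move=> Hst; exact: part1.
by move=> Hss; exact: part2.
Qed.
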